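(* Let $A\in M_2(\mathbb{C})$ with $\operatorname{tr}A=0$ and $q\in\mathbb{R}$. Let $M_A=I\otimes A-q\,A^T\otimes I\in M_4(\mathbb{C})$. Then the operator norm of $M_A$ satisfies $$\|M_A\|_{op}^2\le (1+q^2)\,\|A\|_F^2 .$$
   Context: $\|X\|_F=\sqrt{\operatorname{tr}(XX^\dagger)}$ is the Frobenius norm, $\|X\|_{op}$ is the largest singular value of $X$, $I$ is the $2\times 2$ identity, $A^T$ is the transpose and $\otimes$ the Kronecker product. (With the vectorization $|B\rangle\!\rangle=\sum_{i,j}b_{ij}\,e_j\otimes e_i$ of $B=(b_{ij})$, one has $|AB-qBA\rangle\!\rangle=M_A|B\rangle\!\rangle$ and $\|B\|_F=\||B\rangle\!\rangle\|$.) *)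

(* Defs.v *)
From HB Require Import structures.
From mathcomp Require Import all_boot all_order all_algebra.
From mathcomp Require Import complex mxtens.
From mathcomp Require Import boolp classical_sets reals.
Set Implicit Arguments. Unset Strict Implicit. Unset Printing Implicit Defensive.
Import Order.TTheory GRing.Theory Num.Theory.
Local Open Scope ring_scope.
Local Open Scope classical_set_scope.

Definition csqmod (R : realType) (z : R[i]) : R := complex.Re z ^+ 2 + complex.Im z ^+ 2.

Definition frobnorm (R : realType) (m n : nat) (X : 'M[R[i]]_(m, n)) : R :=
  Num.sqrt (\sum_(i < m) \sum_(j < n) csqmod (X i j)).

Definition vnorm (R : realType) (n : nat) (x : 'cV[R[i]]_n) : R :=
  Num.sqrt (\sum_(i < n) csqmod (x i 0)).

Definition opnorm (R : realType) (m n : nat) (M : 'M[R[i]]_(m, n)) : R :=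
  sup [set vnorm (M *m x) | x in [set x : 'cV[R[i]]_n | vnorm x = 1]].

Definition MA (R : realType) (q : R) (A : 'M[R[i]]_2) : 'M[R[i]]_(2 * 2) :=
  (1%:M *t A) - (q%:C)%C *: (A^T *t 1%:M).

(* Main.v *)
Require Import Defs.
From HB Require Import structures.
From mathcomp Require Import all_boot all_order all_algebra.
From mathcomp Require Import complex mxtens.
From mathcomp Require Import boolp classical_sets reals.
From mathcomp Require Import ring lra.
Import Order.TTheory GRing.Theory Num.Theory.
Local Open Scope ring_scope.
Local Open Scope complex_scope.

Lemma csqmodC (R : realType) (z : R[i]) : (csqmod z)%:C = z * z^*.
Proof.
case: z => a b; rewrite /csqmod /=.
apply/eqP; rewrite eq_complex /=; apply/andP; split; apply/eqP; ring.
Qed.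

Lemma csqmod_ge0 (R : realType) (z : R[i]) : 0 <= csqmod z.
Proof. by rewrite /csqmod addr_ge0 // sqr_ge0. Qed.

Lemma ReC (R : realType) (z : R[i]) : (2 * complex.Re z)%:C = z + z^*.
Proof. case: z => a b /=; apply/eqP; rewrite eq_complex /=; apply/andP; split; apply/eqP; ring. Qed.

Lemma Re_sq_le (R : realType) (z : R[i]) : complex.Re z ^+ 2 <= csqmod z.
Proof. by rewrite /csqmod lerDl sqr_ge0. Qed.

Lemma csqmodM (R : realType) (x y : R[i]) : csqmod (x * y) = csqmod x * csqmod y.
Proof. apply: complexI; rewrite !rmorphM /= !csqmodC rmorphM /=; ring. Qed.

Lemma disc (R : realType) (P Q K u v : R) : 0 <= P -> 0 <= Q -> K ^+ 2 <= P * Q ->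
  0 <= u ^+ 2 * P + v ^+ 2 * Q - 2 * u * v * K.
Proof.
move=> hP hQ hK.
have [P0|Pp] := eqVneq P 0.
  move: hK; rewrite P0 mul0r mulr0 => hK.
  have K0 : K = 0 by apply/eqP; rewrite -sqrf_eq0 eq_le hK sqr_ge0.
  by rewrite K0 mulr0 add0r subr0 mulr_ge0 // sqr_ge0.
have Pgt : 0 < P by rewrite lt_def Pp hP.
have E : P * (u ^+ 2 * P + v ^+ 2 * Q - 2 * u * v * K) =
         (u * P - v * K) ^+ 2 + v ^+ 2 * (P * Q - K ^+ 2) by ring.
rewrite -(pmulr_rge0 _ Pgt) E addr_ge0 ?sqr_ge0 // mulr_ge0 ?sqr_ge0 //.
by rewrite subr_ge0.
Qed.

Definition i0 : 'I_2 := ord0.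
Definition i1 : 'I_2 := ord_max.

Lemma sum2 (V : nmodType) (f : 'I_2 -> V) : \sum_(i < 2) f i = f i0 + f i1.
Proof. by rewrite big_ord_recl big_ord1; congr (_ + f _); apply: val_inj. Qed.

Lemma sum4 (V : nmodType) (f : 'I_(2*2) -> V) :
  \sum_(k < 2*2) f k = f (mxtens_index (i0,i0)) + f (mxtens_index (i0,i1))
     + f (mxtens_index (i1,i0)) + f (mxtens_index (i1,i1)).
Proof.
rewrite (reindex (@mxtens_index 2 2)) /=; last first.
  by exists (@mxtens_unindex 2 2) => k _; rewrite (mxtens_indexK, mxtens_unindexK).
have -> : \sum_j f (mxtens_index j) = \sum_i \sum_j f (mxtens_index (i,j)).
  by rewrite pair_bigA; apply: eq_bigr => -[].
by rewrite !sum2 addrA.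
Qed.

Lemma idI (R : realType) (a b c w x y z : R[i]) (q : R) :
  8 * ((1 + q^+2) * (2*csqmod a + csqmod b + csqmod c) * (csqmod w + csqmod x + csqmod y + csqmod z)
  - (csqmod (a*w + b*y - q%:C*(w*a + x*c)) + csqmod (a*x + b*z - q%:C*(w*b - x*a))
  + csqmod (c*w - a*y - q%:C*(y*a + z*c)) + csqmod (c*x - a*z - q%:C*(y*b - z*a))))
  = 2 * ((1-q)^+2 * ((2*csqmod a + csqmod b + csqmod c) * (csqmod (w-z) + 2 * csqmod x + 2 * csqmod y)
            - 2 * csqmod (a*(w-z) + b*y + c*x))
       + (1+q)^+2 * ((2*csqmod a + csqmod b + csqmod c) * csqmod (w+z)
            + (2*csqmod a + csqmod b + csqmod c) * (csqmod (w-z) + 2 * csqmod x + 2 * csqmod y)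
            - (2 * csqmod (b*y - c*x) + csqmod (2*a*x - b*(w-z)) + csqmod (c*(w-z) - 2*a*y))))
    - 2 * (1-q) * (1+q) * (2 * complex.Re ((w+z) * (2*a*(b*y-c*x)^* + b*(2*a*x-b*(w-z))^* + c*(c*(w-z)-2*a*y)^*))).
Proof.
  case: a => a1 a2; case: b => b1 b2; case: c => c1 c2; case: w => w1 w2;
  case: x => x1 x2; case: y => y1 y2; case: z => z1 z2.
  rewrite /csqmod /=.
  ring.
Qed.

Ltac crush := 
  repeat match goal with z : complex _ |- _ => case: z => ? ? end;
  rewrite /csqmod /=; ring.

Lemma idP4 (R : realType) (a b c w x y z : R[i]) :
  (2*csqmod a + csqmod b + csqmod c) * (csqmod (w-z) + 2 * csqmod x + 2 * csqmod y)
            - 2 * csqmod (a*(w-z) + b*y + c*x)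
  = 2 * csqmod (x*b^* - y*c^*) + csqmod ((w-z)*c^* - 2*x*a^*) + csqmod (2*y*a^* - (w-z)*b^*).
Proof. crush. Qed.

Lemma idQ4 (R : realType) (a b c w x y z : R[i]) :
  (2*csqmod a + csqmod b + csqmod c) * (csqmod (w-z) + 2 * csqmod x + 2 * csqmod y)
  - (2 * csqmod (b*y - c*x) + csqmod (2*a*x - b*(w-z)) + csqmod (c*(w-z) - 2*a*y))
  = 2 * csqmod (a*(w-z)^* + b*x^* + c*y^*).
Proof. crush. Qed.

Lemma idCS4 (R : realType) (p1 p2 p3 p4 r1 r2 r3 r4 : R[i]) :
  (csqmod p1 + csqmod p2 + csqmod p3 + csqmod p4) * (csqmod r1 + csqmod r2 + csqmod r3 + csqmod r4)
  - csqmod (p1*r1 + p2*r2 + p3*r3 + p4*r4)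
  = csqmod (p1*r2^* - p2*r1^*) + csqmod (p1*r3^* - p3*r1^*) + csqmod (p1*r4^* - p4*r1^*)
  + csqmod (p2*r3^* - p3*r2^*) + csqmod (p2*r4^* - p4*r2^*) + csqmod (p3*r4^* - p4*r3^*).
Proof. crush. Qed.

Lemma idAC (R : realType) (a b c w x y z : R[i]) :
  csqmod (2*a*(b*y-c*x)^* + b*(2*a*x-b*(w-z))^* + c*(c*(w-z)-2*a*y)^*)
  = csqmod (a*(x*b^* - y*c^*) + a*(x*b^* - y*c^*) + b*(2*y*a^* - (w-z)*b^*) + c*((w-z)*c^* - 2*x*a^*)).
Proof. crush. Qed.

Lemma csqmodM' (R : realType) (x y : R[i]) : csqmod (x * y) = csqmod x * csqmod y.
Proof. crush. Qed.

Ltac pos := repeat first [ apply: csqmod_ge0 | apply: ler0n | apply: addr_ge0 | apply: mulr_ge0 ].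

Lemma core (R : realType) (a b c w x y z : R[i]) (q : R) :
  csqmod (a*w + b*y - q%:C*(w*a + x*c)) + csqmod (a*x + b*z - q%:C*(w*b - x*a))
  + csqmod (c*w - a*y - q%:C*(y*a + z*c)) + csqmod (c*x - a*z - q%:C*(y*b - z*a))
  <= (1 + q^+2) * (2*csqmod a + csqmod b + csqmod c) * (csqmod w + csqmod x + csqmod y + csqmod z).
Proof.
rewrite -subr_ge0 -(@pmulr_rge0 _ 8) //.
rewrite idI.
set F2 := 2*csqmod a + csqmod b + csqmod c.
set G0p := csqmod (w-z) + 2 * csqmod x + 2 * csqmod y.
set P4 := F2 * G0p - 2 * csqmod _.
set C2 := 2 * csqmod (b*y - c*x) + _ + _.
set AC := 2*a*(b*y-c*x)^* + _ + _.
have hP : P4 = 2 * csqmod (x*b^* - y*c^*) + csqmod ((w-z)*c^* - 2*x*a^*) + csqmod (2*y*a^* - (w-z)*b^*)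
  by rewrite /P4 idP4.
have hQ : F2 * G0p - C2 = 2 * csqmod (a*(w-z)^* + b*x^* + c*y^*) by rewrite idQ4.
have P4ge : 0 <= P4.
  by rewrite hP; pos.
have Qge : F2 * csqmod (w+z) <= F2 * csqmod (w + z) + F2 * G0p - C2.
  by rewrite -addrA hQ lerDl; pos.
have F2ge : 0 <= F2 by rewrite /F2; pos.
have CS : csqmod AC <= F2 * P4.
  rewrite /AC idAC hP -subr_ge0.
  have := @idCS4 R a a b c (x*b^* - y*c^*) (x*b^* - y*c^*) (2*y*a^* - (w-z)*b^*) ((w-z)*c^* - 2*x*a^*).
  have -> : csqmod a + csqmod a + csqmod b + csqmod c = F2 by rewrite /F2; ring.
  have -> : csqmod (x*b^* - y*c^*) + csqmod (x*b^* - y*c^*) + csqmod (2*y*a^* - (w-z)*b^*)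
     + csqmod ((w-z)*c^* - 2*x*a^*)
     = 2 * csqmod (x*b^* - y*c^*) + csqmod ((w-z)*c^* - 2*x*a^*) + csqmod (2*y*a^* - (w-z)*b^*).
    by ring.
  by move=> ->; pos.
have KB : (complex.Re ((w+z) * AC)) ^+ 2 <= P4 * (F2 * csqmod (w + z) + F2 * G0p - C2).
  apply: (le_trans (@Re_sq_le R _)); rewrite csqmodM'.
  apply: (le_trans (y := csqmod (w+z) * (F2 * P4))).
    by rewrite ler_wpM2l ?csqmod_ge0.
  have -> : csqmod (w+z) * (F2 * P4) = P4 * (F2 * csqmod (w+z)) by ring.
  apply: ler_wpM2l => //.
have := @disc R _ _ _ (1 - q) (1 + q) P4ge (le_trans (mulr_ge0 F2ge (@csqmod_ge0 R _)) Qge) KB.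
move=> h.
set X := complex.Re _.
have -> : 2 * ((1 - q) ^+ 2 * P4 + (1 + q) ^+ 2 * (F2 * csqmod (w + z) + F2 * G0p - C2)) -
  2 * (1 - q) * (1 + q) * (2 * X) = 2 * ((1 - q) ^+ 2 * P4 + (1 + q) ^+ 2 * (F2 * csqmod (w + z) + F2 * G0p - C2)
   - 2 * (1 - q) * (1 + q) * X) by ring.
by rewrite mulr_ge0.
Qed.

Lemma keyb (R : realType) (A : 'M[R[i]]_2) (q : R) (x : 'cV[R[i]]_(2*2)) : \tr A = 0 ->
  \sum_(k < 2*2) csqmod ((MA q A *m x) k 0) <=
  (1 + q^+2) * (\sum_(i < 2) \sum_(j < 2) csqmod (A i j)) * (\sum_(k < 2*2) csqmod (x k 0)).
Proof.
rewrite /mxtrace sum2 => tr0.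
have a11 : A i1 i1 = - A i0 i0 by apply/eqP; rewrite -addr_eq0 addrC tr0.
rewrite !sum4 !sum2 !mxE !sum4 !mxE !mxtens_indexK /= a11.
move: (A i0 i0) (A i0 i1) (A i1 i0) (x (mxtens_index (i0, i0)) 0) (x (mxtens_index (i0, i1)) 0)
  (x (mxtens_index (i1, i0)) 0) (x (mxtens_index (i1, i1)) 0) => a b c w y x' z.
have h := @core R a b c w x' y z q.
have -> : (1 * a - q%:C * (a * 1)) * w + (1 * b - q%:C * (a * 0)) * y + (0 * a - q%:C * (c * 1)) * x'
  + (0 * b - q%:C * (c * 0)) * z = a*w + b*y - q%:C*(w*a + x'*c) by ring.
have -> : (1 * c - q%:C * (a * 0)) * w + (1 * - a - q%:C * (a * 1)) * y + (0 * c - q%:C * (c * 0)) * x'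
  + (0 * - a - q%:C * (c * 1)) * z = c*w - a*y - q%:C*(y*a + z*c) by ring.
have -> : (0 * a - q%:C * (b * 1)) * w + (0 * b - q%:C * (b * 0)) * y + (1 * a - q%:C * (- a * 1)) * x'
  + (1 * b - q%:C * (- a * 0)) * z = a*x' + b*z - q%:C*(w*b - x'*a) by ring.
have -> : (0 * c - q%:C * (b * 0)) * w + (0 * - a - q%:C * (b * 1)) * y + (1 * c - q%:C * (- a * 0)) * x'
  + (1 * - a - q%:C * (- a * 1)) * z = c*x' - a*z - q%:C*(y*b - z*a) by ring.
have -> : csqmod (- a) = csqmod a by crush.
apply: (le_trans _ (le_trans h _)).
  by rewrite le_eqVlt; apply/orP; left; apply/eqP; ring.
by rewrite le_eqVlt; apply/orP; left; apply/eqP; ring.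
Qed.

Local Open Scope classical_set_scope.

Lemma sum_csq_ge0 (R : realType) n (f : 'I_n -> R[i]) : 0 <= \sum_(k < n) csqmod (f k).
Proof. by apply: sumr_ge0 => k _; apply: csqmod_ge0. Qed.

Theorem mainTheorem6 (R : realType) (A : 'M[R[i]]_2) (q : R) :
  \tr A = 0 ->
  opnorm (MA q A) ^+ 2 <= (1 + q ^+ 2) * frobnorm A ^+ 2.
Proof.
move=> tr0.
have Fs : frobnorm A ^+ 2 = \sum_(i < 2) \sum_(j < 2) csqmod (A i j).
  rewrite /frobnorm sqr_sqrtr //; apply: sumr_ge0 => i _; exact: sum_csq_ge0.
have Bge : 0 <= (1 + q ^+ 2) * frobnorm A ^+ 2 by rewrite mulr_ge0 // ?addr_ge0 ?sqr_ge0.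
set bnd := Num.sqrt ((1 + q ^+ 2) * frobnorm A ^+ 2).
have ub : ubound [set vnorm (MA q A *m x) | x in [set x : 'cV[R[i]]_(2*2) | vnorm x = 1]] bnd.
  move=> _ [x /= hx <-].
  have hx1 : \sum_(k < 2*2) csqmod (x k 0) = 1.
    by rewrite -(sqr_sqrtr (@sum_csq_ge0 R _ (fun k => x k 0))) -/(vnorm x) hx expr1n.
  rewrite /vnorm /bnd ler_sqrt // Fs.
  by have := @keyb R A q x tr0; rewrite hx1 mulr1.
pose e : 'cV[R[i]]_(2*2) := delta_mx (mxtens_index (i0, i0)) 0.
have he : vnorm e = 1.
  rewrite /vnorm sum4 !mxE /=.
  by rewrite /csqmod /= expr1n expr0n /= !addr0 sqrtr1.
have ne : [set vnorm (MA q A *m x) | x in [set x : 'cV[R[i]]_(2*2) | vnorm x = 1]] !=set0.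
  by exists (vnorm (MA q A *m e)); exists e.
have le1 : opnorm (MA q A) <= bnd by apply: ge_sup.
have ge0 : 0 <= opnorm (MA q A).
  apply: (le_trans (sqrtr_ge0 (\sum_(k < 2*2) csqmod ((MA q A *m e) k 0)))).
  apply: ub_le_sup; first by exists bnd.
  by exists e.
rewrite -(sqr_sqrtr Bge) -/bnd !expr2.
by apply: ler_pM.
Qed.
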